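(* Let $\mathcal{H}$ be a $d$-dimensional Hilbert space with orthonormal basis $\{|1\rangle,\dots,|d\rangle\}$ and let $0\le n\le d$. Define $A_n:\mathcal{H}^{\otimes n}\to\mathcal{H}^{\otimes d-n}$ by $$A_n=\frac{1}{\sqrt{(d-n)!\,n!}}\sum_{\sigma\in S_d}\operatorname{sgn}(\sigma)\,|\sigma_{n+1},\dots,\sigma_d\rangle\langle\sigma_1,\dots,\sigma_n|,$$ where $S_d$ is the symmetric group on $\{1,\dots,d\}$. Let $\mathcal{E}:\mathcal{B}(\mathcal{H}^{\otimes n})\to\mathcal{B}(\mathcal{H}^{\otimes d-n})$ be a completely positive trace-preserving map having $A_n$ as one of its Kraus operators, and $\mathcal{D}:\mathcal{B}(\mathcal{H}^{\otimes d-n})\to\mathcal{B}(\mathcal{H}^{\otimes n})$ a completely positive trace-preserving map having $A_n^\dagger$ as one of its Kraus operators. Then for every unitary $U$ on $\mathcal{H}$ and every density operator $\rho$ supported on the antisymmetric subspace of $\mathcal{H}^{\otimes n}$, $$\mathcal{D}\big(U^{\otimes d-n}\,\mathcal{E}(\rho)\,U^{\dagger\otimes d-n}\big)=U^{*\otimes n}\rho\,(U^{*\dagger})^{\otimes n},$$ where $U^*$ is the entrywise complex conjugate of $U$ in the basis $\{|i\rangle\}$.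
   Context: The antisymmetric subspace of $\mathcal{H}^{\otimes m}$ is the subspace of vectors $v$ with $P_\pi v=\operatorname{sgn}(\pi)v$ for every permutation $P_\pi$ of the tensor factors. *)

(* Defs.v *)
From HB Require Import structures.
From mathcomp Require Import all_boot all_order all_algebra all_fingroup all_field.
Set Implicit Arguments. Unset Strict Implicit. Unset Printing Implicit Defensive.
Import Order.TTheory GRing.Theory Num.Theory.
Local Open Scope ring_scope.

(* Basis of H^{(x) k}, H = C^d with basis |1>,...,|d> (here indexed by 'I_d):
   tuples i : 'I_k -> 'I_d, i.e. |i_1,...,i_k>. *)
Notation tens d k := {ffun 'I_k -> 'I_d}.
(* dim H^{(x) k} ; operators are matrices indexed through enum_val. *)
Definition dimT (d k : nat) : nat := #|tens d k|.
Definition bvec (d k : nat) (i : 'I_(dimT d k)) : tens d k := enum_val i.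

Definition mxadj (p q : nat) (A : 'M[algC]_(p, q)) : 'M[algC]_(q, p) :=
  (map_mx Num.conj A)^T.

Definition tensU (d k : nat) (U : 'M[algC]_d) : 'M[algC]_(dimT d k) :=
  \matrix_(i, j) \prod_(l < k) U (bvec i l) (bvec j l).

Definition sgnC (n : nat) (s : 'S_n) : algC := (-1) ^+ s.

(* A_n = 1/sqrt((d-n)! n!) sum_s sgn(s) |s_{n+1},...,s_d><s_1,...,s_n| *)
Definition Aop (d n : nat) (hnd : (n <= d)%N) :
  'M[algC]_(dimT d (d - n), dimT d n) :=
  \matrix_(i, j) ((sqrtC (((d - n)`!)%:R * (n`!)%:R))^-1 *
    \sum_(s : 'S_d) sgnC s *
      ((bvec i == [ffun l => s (cast_ord (subnKC hnd) (rshift n l))]) &&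
       (bvec j == [ffun l => s (cast_ord (subnKC hnd) (lshift (d - n) l))]))%:R).

Definition kraus_rep (p q : nat) (E : 'M[algC]_p -> 'M[algC]_q) (m : nat)
  (K : 'I_m -> 'M[algC]_(q, p)) : Prop :=
  \sum_(k < m) (mxadj (K k) *m K k) = 1%:M /\
  forall X : 'M[algC]_p, E X = \sum_(k < m) (K k *m X *m mxadj (K k)).

Definition cptp_with_kraus (p q : nat) (E : 'M[algC]_p -> 'M[algC]_q)
  (A : 'M[algC]_(q, p)) : Prop :=
  exists m (K : 'I_m -> 'M[algC]_(q, p)), kraus_rep E K /\ exists k, K k = A.

Definition permT (d k : nat) (s : 'S_k) : 'M[algC]_(dimT d k) :=
  \matrix_(i, j) (bvec i == [ffun l => bvec j (s l)])%:R.

Definition unitary (d : nat) (U : 'M[algC]_d) : Prop := U *m mxadj U = 1%:M.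

Definition density (p : nat) (rho : 'M[algC]_p) : Prop :=
  mxadj rho = rho /\
  (forall v : 'cV[algC]_p, 0 <= (mxadj v *m rho *m v) 0 0) /\ \tr rho = 1.

(* rho supported on the antisymmetric subspace: P_pi rho = sgn(pi) rho *)
Definition antisym_supported (d k : nat) (rho : 'M[algC]_(dimT d k)) : Prop :=
  forall s : 'S_k, permT d s *m rho = sgnC s *: rho.

(* Main.v *)
Require Import Defs.
From mathcomp Require Import all_boot all_order all_algebra all_fingroup all_field.
From mathcomp Require Import ring.
Set Implicit Arguments. Unset Strict Implicit. Unset Printing Implicit Defensive.
Import GRing.Theory Num.Theory.
Local Open Scope ring_scope.

Section Split.
Variables (d n m : nat) (L : 'I_n -> 'I_d) (R : 'I_m -> 'I_d).
Hypotheses (L_inj : injective L) (R_inj : injective R)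
  (LR_neq : forall l r, L l != R r)
  (LR_cover : forall t, (exists l, t = L l) \/ (exists r, t = R r))
  (hd : d = (n + m)%N).

Definition conc (f : 'I_n -> 'I_d) (g : 'I_m -> 'I_d) (t : 'I_d) : 'I_d :=
  if [pick l | L l == t] is Some l then f l else
  if [pick r | R r == t] is Some r then g r else t.

Lemma concL f g l : conc f g (L l) = f l.
Proof.
rewrite /conc; case: pickP => [l' /eqP/L_inj -> //|/(_ l)]; by rewrite eqxx.
Qed.

Lemma concR f g r : conc f g (R r) = g r.
Proof.
rewrite /conc; case: pickP => [l' /eqP H|_].
  by move: (LR_neq l' r); rewrite H eqxx.
case: pickP => [r' /eqP/R_inj -> //|/(_ r)]; by rewrite eqxx.
Qed.

Lemma eq_LR (h h' : 'I_d -> 'I_d) :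
  (forall l, h (L l) = h' (L l)) -> (forall r, h (R r) = h' (R r)) -> h =1 h'.
Proof. by move=> HL HR t; case: (LR_cover t) => [[l ->]|[r ->]]. Qed.

Lemma conc_inj f g : injective f -> injective g -> (forall l r, f l != g r) ->
  injective (conc f g).
Proof.
move=> fi gi fg t1 t2.
case: (LR_cover t1) => [[l1 ->]|[r1 ->]]; case: (LR_cover t2) => [[l2 ->]|[r2 ->]];
  rewrite ?concL ?concR.
- by move/fi->.
- by move=> H; move: (fg l1 r2); rewrite H eqxx.
- by move=> H; move: (fg l2 r1); rewrite H eqxx.
- by move/gi->.
Qed.

Definition extLf (t : 'S_n) := conc (fun l => L (t l)) R.

Lemma extLf_inj t : injective (extLf t).
Proof.
apply: conc_inj => //; first by move=> a b /L_inj/perm_inj.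
Qed.

Definition extL (t : 'S_n) : 'S_d := perm (@extLf_inj t).

Lemma extL_L t l : extL t (L l) = L (t l).
Proof. by rewrite permE /extLf concL. Qed.
Lemma extL_R t r : extL t (R r) = R r.
Proof. by rewrite permE /extLf concR. Qed.

Lemma extL_inj : injective extL.
Proof.
move=> t1 t2 H; apply/permP => l; apply: L_inj.
by rewrite -!extL_L H.
Qed.

Lemma extLM t1 t2 : extL (t1 * t2)%g = (extL t1 * extL t2)%g.
Proof.
apply/permP; apply: eq_LR => [l|r]; rewrite !permM ?extL_L ?extL_R //.
by rewrite permM.
Qed.

Lemma extL1 : extL 1%g = 1%g.
Proof. by apply/permP; apply: eq_LR => [l|r]; rewrite ?extL_L ?extL_R !perm1. Qed.

Lemma extL_tperm a b : extL (tperm a b) = tperm (L a) (L b).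
Proof.
apply/permP; apply: eq_LR => [l|r]; rewrite ?extL_L ?extL_R.
  rewrite !permE /=; rewrite !(inj_eq L_inj).
  by case: ifP => //; case: ifP.
rewrite permE /=; rewrite ![R r == _]eq_sym !(negbTE (LR_neq _ _)) //.
Qed.

Lemma odd_extL t : odd_perm (extL t) = odd_perm t.
Proof.
case: (prod_tpermP t) => ts -> Hts.
have -> : extL (\prod_(p <- ts) tperm p.1 p.2)%g =
          (\prod_(p <- map (fun p => (L p.1, L p.2)) ts) tperm p.1 p.2)%g.
  elim: ts {Hts} => [|p ts IH]; first by rewrite !big_nil extL1.
  by rewrite big_cons /= big_cons extLM IH extL_tperm.
rewrite !odd_perm_prod ?size_map //.
by rewrite all_map; apply: sub_all Hts => p; rewrite /dpair /= (inj_eq L_inj).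
Qed.

Definition fixR (p : 'S_d) := [forall r, p (R r) == R r].

Lemma fixR_extL (p : 'S_d) : fixR p -> exists t, p = extL t.
Proof.
move=> /forallP Hf.
have HinL l : exists l', L l' = p (L l).
  case: (LR_cover (p (L l))) => [[l' ->]|[r Hr]]; first by exists l'.
  move: (Hf r) => /eqP; rewrite -{2}Hr => /perm_inj H.
  by move: (LR_neq l r); rewrite H eqxx.
pose tf l := if [pick l' | L l' == p (L l)] is Some l' then l' else l.
have Htf l : L (tf l) = p (L l).
  rewrite /tf; case: pickP => [l' /eqP //|H].
  by case: (HinL l) => l' Hl'; move: (H l'); rewrite Hl' eqxx.
have tfi : injective tf.
  by move=> a b H; apply: L_inj; apply: (@perm_inj _ p); rewrite -!Htf H.
exists (perm tfi); apply/permP; apply: eq_LR => [l|r].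
  by rewrite extL_L permE Htf.
by rewrite extL_R; apply/eqP.
Qed.

Lemma sum_fixR (F : 'S_d -> algC) :
  \sum_(p | fixR p) F p = \sum_(t : 'S_n) F (extL t).
Proof.
rewrite -(big_imset (h := extL) (A := predT)) /=; last by move=> a b _ _; apply: extL_inj.
apply: eq_bigl => p; apply/idP/imsetP.
  by case/fixR_extL => t ->; exists t.
by case=> t _ ->; apply/forallP => r; rewrite extL_R.
Qed.

End Split.
Section Split2.
Variables (d n m : nat) (L : 'I_n -> 'I_d) (R : 'I_m -> 'I_d).
Hypotheses (L_inj : injective L) (R_inj : injective R)
  (LR_neq : forall l r, L l != R r)
  (LR_cover : forall t, (exists l, t = L l) \/ (exists r, t = R r))
  (hd : d = (n + m)%N).

Lemma ext_exists (f : 'I_n -> 'I_d) : injective f ->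
  exists s : 'S_d, forall l, s (L l) = f l.
Proof.
move=> fi.
pose C := [set t | t \notin codom f].
have HC : m = #|C|.
  have := cardsC [set t | t \in codom f].
  rewrite card_ord (_ : #|[set t | t \in codom f]| = n); last first.
    transitivity #|'I_n|; last exact: card_ord.
    rewrite -(card_codom fi); apply: eq_card => t; by rewrite inE.
  rewrite (_ : ~: _ = C); last by apply/setP => t; rewrite !inE.
  by move=> H; apply/eqP; rewrite -(eqn_add2l n) H -hd.
pose g (r : 'I_m) : 'I_d := enum_val (cast_ord HC r).
have gi : injective g by move=> a b /enum_val_inj /cast_ord_inj.
have fg l r : f l != g r.
  apply/eqP => H; have := enum_valP (cast_ord HC r); rewrite -/(g r) -H.
  by rewrite !inE codom_f.
exists (perm (conc_inj L_inj R_inj LR_neq LR_cover fi gi fg)) => l.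
by rewrite permE concL.
Qed.

Lemma count_ext (ff : {ffun 'I_n -> 'I_d}) : injective ff ->
  \sum_(s : 'S_d) (ff == [ffun l => s (L l)])%:R = (m`!)%:R :> algC.
Proof.
move=> fi; case: (ext_exists fi) => s0 Hs0.
rewrite (reindex_inj (h := fun p => (p * s0)%g) (mulIg s0)) /=.
have RL_neq r l : R r != L l by rewrite eq_sym.
have RL_cover t : (exists r, t = R r) \/ (exists l, t = L l).
  by case: (LR_cover t); [right|left].
transitivity (\sum_(p | fixR L p) (1 : algC)).
  rewrite [RHS]big_mkcond /=; apply: eq_bigr => p _.
  have -> : (ff == [ffun l => (p * s0)%g (L l)]) = fixR L p.
    apply/eqP/forallP => [H l|H].
      apply/eqP; apply: (@perm_inj _ s0); rewrite Hs0 -permM.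
      by move/ffunP: H => /(_ l); rewrite ffunE => <-.
    by apply/ffunP => l; rewrite !ffunE permM (eqP (H l)) Hs0.
  by case: (fixR L p).
rewrite (sum_fixR R_inj L_inj RL_neq RL_cover) sumr_const card_Sn.
by [].
Qed.

End Split2.
Lemma prod_indic (I : finType) (b : I -> bool) :
  (\prod_(i : I) (b i)%:R : algC) = [forall i, b i]%:R.
Proof.
case E: [forall i, b i].
  by rewrite big1 // => i _; rewrite (forallP E i).
move/negbT: E => /forallPn [i /negbTE Hi].
by rewrite (bigD1 i) //= Hi mul0r.
Qed.

Lemma sum_collapse (T : finType) (x : T) (F : T -> algC) :
  \sum_(y : T) (y == x)%:R * F y = F x.
Proof.
rewrite (bigD1 x) //= eqxx mul1r big1 ?addr0 // => y /negbTE ->; by rewrite mul0r.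
Qed.

Lemma sum_tens (T : finType) (F : T -> algC) :
  \sum_(i < #|T|) F (enum_val i) = \sum_(x : T) F x.
Proof.
rewrite (reindex (@enum_rank T)) /=; last first.
  by exists enum_val => x _; [rewrite enum_rankK|rewrite enum_valK].
by apply: eq_bigr => x _; rewrite enum_rankK.
Qed.

Lemma sum_rank (T : finType) (F : 'I_#|T| -> algC) :
  \sum_(i < #|T|) F i = \sum_(x : T) F (enum_rank x).
Proof.
rewrite (reindex (@enum_rank T)) //.
by exists enum_val => x _; [rewrite enum_rankK|rewrite enum_valK].
Qed.

Lemma sgnC_sq n (s : 'S_n) : sgnC s * sgnC s = 1.
Proof. by rewrite /sgnC -signr_addb addbb. Qed.

Lemma sgnCM n (s t : 'S_n) : sgnC (s * t)%g = sgnC s * sgnC t.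
Proof. by rewrite /sgnC odd_permM signr_addb. Qed.

Section Concrete.
Variables (d n : nat) (hnd : (n <= d)%N).
Local Notation m := (d - n)%N.
Definition castL (l : 'I_n) : 'I_d := cast_ord (subnKC hnd) (lshift m l).
Definition castR (r : 'I_m) : 'I_d := cast_ord (subnKC hnd) (rshift n r).

Lemma castL_inj : injective castL.
Proof. by move=> a b /cast_ord_inj /lshift_inj. Qed.
Lemma castR_inj : injective castR.
Proof. by move=> a b /cast_ord_inj /rshift_inj. Qed.
Lemma castLR_neq l r : castL l != castR r.
Proof.
apply/eqP => /(congr1 val) /= H; move: (ltn_ord l); rewrite H.
by rewrite ltnNge leq_addr.
Qed.
Lemma cast_cover t : (exists l, t = castL l) \/ (exists r, t = castR r).
Proof.
case: (splitP (cast_ord (esym (subnKC hnd)) t)) => [l Hl|r Hr].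
  by left; exists l; apply: val_inj; rewrite /= -Hl.
by right; exists r; apply: val_inj; rewrite /= -Hr.
Qed.
Lemma hd : d = (n + m)%N.
Proof. by rewrite subnKC. Qed.

Definition eps2 (f : tens d n) (g : tens d m) : algC :=
  \sum_(s : 'S_d) sgnC s * ((g == [ffun l => s (castR l)]) &&
                            (f == [ffun l => s (castL l)]))%:R.

Lemma prod_splitLR (F : 'I_d -> algC) :
  \prod_(t < d) F t = \prod_(l < n) F (castL l) * \prod_(r < m) F (castR r).
Proof.
rewrite (reindex (cast_ord (subnKC hnd))) /=; last first.
  by exists (cast_ord (esym (subnKC hnd))) => x _; rewrite ?cast_ordK ?cast_ordKV.
by rewrite big_split_ord.
Qed.

Definition ext := extL castL_inj castR_inj castLR_neq cast_cover.

Local Notation cc := (cast_cover).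

Lemma eps2_perm (f' : tens d n) (s : 'S_d) :
  eps2 f' [ffun r => s (castR r)] =
  sgnC s * \sum_(t : 'S_n) sgnC t * (f' == [ffun l => s (castL (t l))])%:R.
Proof.
rewrite /eps2 (reindex_inj (mulIg s)) /=.
transitivity (\sum_(p : 'S_d) sgnC s * (sgnC p * (fixR castR p)%:R *
                  (f' == [ffun l => s (p (castL l))])%:R)).
  apply: eq_bigr => p _; rewrite sgnCM.
  have -> : ([ffun r => s (castR r)] == [ffun l => (p * s)%g (castR l)]) = fixR castR p.
    apply/eqP/forallP => [H r | H].
      move/ffunP: H => /(_ r); rewrite !ffunE permM => /perm_inj H.
      by rewrite -H.
    by apply/ffunP => r; rewrite !ffunE permM (eqP (H r)).
  have -> : [ffun l => (p * s)%g (castL l)] = [ffun l => s (p (castL l))].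
    by apply/ffunP => l; rewrite !ffunE permM.
  rewrite -mulnb natrM; ring.
rewrite -mulr_sumr; congr (_ * _).
transitivity (\sum_(p | fixR castR p) sgnC p * (f' == [ffun l => s (p (castL l))])%:R).
  rewrite [RHS]big_mkcond; apply: eq_bigr => p _.
  by case: (fixR castR p); rewrite ?mulr1 ?mulr0 ?mul0r.
rewrite (sum_fixR castL_inj castR_inj castLR_neq cast_cover).
apply: eq_bigr => t _; rewrite /sgnC odd_extL.
congr (_ * (_ == _)%:R); apply/ffunP => l; rewrite !ffunE.
by rewrite extL_L.
Qed.

Lemma eps2_gram (f f' : tens d n) :
  \sum_(g : tens d m) eps2 f g * eps2 f' g =
  (\sum_(s : 'S_d) (f == [ffun l => s (castL l)])%:R) *
  \sum_(t : 'S_n) sgnC t * (f' == [ffun l => f (t l)])%:R.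
Proof.
under eq_bigr do rewrite [eps2 f _]/eps2 mulr_suml.
rewrite exchange_big /= mulr_suml; apply: eq_bigr => s _.
transitivity (sgnC s * (f == [ffun l => s (castL l)])%:R * eps2 f' [ffun r => s (castR r)]).
  rewrite -[RHS](sum_collapse [ffun r => s (castR r)]
    (fun g => sgnC s * (f == [ffun l => s (castL l)])%:R * eps2 f' g)).
  apply: eq_bigr => g _; rewrite -mulnb natrM; ring.
case: eqP => [Hf|_]; last by rewrite !mulr0 !mul0r.
rewrite eps2_perm mulr1 mul1r mulrA sgnC_sq mul1r.
apply: eq_bigr => t _; congr (_ * (_ == _)%:R).
by apply/ffunP => l; rewrite !ffunE Hf ffunE.
Qed.

Lemma eps2_permL (f : tens d n) (g : tens d m) (t : 'S_n) :
  eps2 [ffun l => f (t l)] g = sgnC t * eps2 f g.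
Proof.
rewrite /eps2 (reindex_inj (mulgI (ext t))) mulr_sumr; apply: eq_bigr => s _.
rewrite sgnCM {1}/sgnC odd_extL -/(sgnC t) -mulrA; congr (_ * (_ * _)).
have -> : [ffun l => (ext t * s)%g (castR l)] = [ffun l => s (castR l)].
  by apply/ffunP => l; rewrite !ffunE permM extL_R.
congr ((_ && _)%:R).
apply/eqP/eqP => H; apply/ffunP => l.
  move/ffunP: H => /(_ (t^-1 l)%g); rewrite !ffunE permM extL_L permKV.
  by [].
by rewrite !ffunE permM extL_L H ffunE.
Qed.

Lemma eps2_det (f : tens d n) (g : tens d m) (U : 'M[algC]_d) :
  eps2 f g * \det U =
  \sum_(s : 'S_d) sgnC s * ((\prod_(l < n) U (f l) (s (castL l))) *
                            (\prod_(r < m) U (g r) (s (castR r)))).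
Proof.
pose h := conc castL castR f g.
have hL l : h (castL l) = f l by rewrite /h (concL castR castL_inj).
have hR r : h (castR r) = g r by rewrite /h (concR castR_inj castLR_neq).
pose P : 'M[algC]_d := \matrix_(a, b) (h a == b)%:R.
have -> : eps2 f g = \det P.
  rewrite /eps2 /determinant; apply: eq_bigr => s _; congr (_ * _).
  rewrite prod_splitLR /P.
  under eq_bigr do rewrite mxE hL.
  under [X in _ * X]eq_bigr do rewrite mxE hR.
  rewrite !prod_indic -natrM mulnb andbC; congr ((_ && _)%:R).
    apply/eqP/forallP => [-> r|H]; first by rewrite ffunE.
    by apply/ffunP => r; rewrite ffunE (eqP (H r)).
  apply/eqP/forallP => [-> r|H]; first by rewrite ffunE.
  by apply/ffunP => r; rewrite ffunE (eqP (H r)).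
rewrite -det_mulmx /determinant; apply: eq_bigr => s _; congr (_ * _).
rewrite prod_splitLR; congr (_ * _); apply: eq_bigr => l _; rewrite mxE.
  by rewrite (bigD1 (h (castL l))) //= mxE eqxx mul1r big1 ?addr0 ?hL //
       => b /negbTE Hb; rewrite mxE ?hL ?hR eq_sym Hb mul0r.
by rewrite (bigD1 (h (castR l))) //= mxE eqxx mul1r big1 ?addr0 ?hR //
       => b /negbTE Hb; rewrite mxE ?hL ?hR eq_sym Hb mul0r.
Qed.

End Concrete.
Lemma conjCM (x y : algC) : (x * y)^* = x^* * y^*.
Proof. exact: rmorphM. Qed.

Lemma mulmxE' p q r (A : 'M[algC]_(p, q)) (B : 'M[algC]_(q, r)) i j :
  (A *m B) i j = \sum_k A i k * B k j.
Proof. by rewrite mxE. Qed.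

Lemma scalemxE' p q a (A : 'M[algC]_(p, q)) i j : (a *: A) i j = a * A i j.
Proof. by rewrite mxE. Qed.

Lemma mxadjE p q (A : 'M[algC]_(p, q)) i j : mxadj A i j = (A j i)^*.
Proof. by rewrite /mxadj !mxE. Qed.

Lemma mxadjK p q (A : 'M[algC]_(p, q)) : mxadj (mxadj A) = A.
Proof. by apply/matrixP => i j; rewrite !mxadjE conjCK. Qed.

Lemma mxadjM p q r (A : 'M[algC]_(p, q)) (B : 'M[algC]_(q, r)) :
  mxadj (A *m B) = mxadj B *m mxadj A.
Proof. by rewrite /mxadj map_mxM trmx_mul. Qed.

Lemma mxadjZ p q a (A : 'M[algC]_(p, q)) : mxadj (a *: A) = a^* *: mxadj A.
Proof. by apply/matrixP => i j; rewrite !mxE rmorphM. Qed.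

Lemma mxadj1 p : mxadj (1%:M : 'M[algC]_p) = 1%:M.
Proof. by apply/matrixP => i j; rewrite !mxE eq_sym; case: (_ == _); rewrite /= ?rmorph1 ?rmorph0. Qed.

Lemma mxadjD p q (A B : 'M[algC]_(p, q)) : mxadj (A + B) = mxadj A + mxadj B.
Proof. by apply/matrixP => i j; rewrite !mxE rmorphD. Qed.

Lemma mxadj_sum p q I (r : seq I) (F : I -> 'M[algC]_(p, q)) :
  mxadj (\sum_(i <- r) F i) = \sum_(i <- r) mxadj (F i).
Proof.
elim: r => [|x r IH]; rewrite ?big_nil ?big_cons.
  by apply/matrixP => i j; rewrite !mxE rmorph0.
by rewrite mxadjD IH.
Qed.

Section Mat.
Variables (d n : nat) (hnd : (n <= d)%N).
Local Notation m := (d - n)%N.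
Local Notation A := (Aop hnd).
Definition cA : algC := (sqrtC ((m`!)%:R * (n`!)%:R))^-1.

Lemma AE i j : A i j = cA * eps2 hnd (bvec j) (bvec i).
Proof. by rewrite mxE. Qed.

Lemma cA_conj : cA^* = cA.
Proof. by apply: geC0_conj; rewrite invr_ge0 sqrtC_ge0 mulr_ge0 ?ler0n. Qed.

Lemma cA_sq : cA * cA = ((m`!)%:R * (n`!)%:R)^-1.
Proof. by rewrite -invfM -expr2 sqrtCK. Qed.

Lemma eps2_conj f g : (eps2 hnd f g)^* = eps2 hnd f g.
Proof.
rewrite /eps2 rmorph_sum; apply: eq_bigr => s _.
by rewrite rmorphM /sgnC rmorph_sign rmorph_nat.
Qed.

Definition Pm : 'M[algC]_(dimT d n) :=
  (n`!%:R)^-1 *: \sum_(t : 'S_n) sgnC t *: permT d t.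

Lemma Pm_entry i j : Pm i j =
  (n`!%:R)^-1 * \sum_(t : 'S_n) sgnC t * (bvec i == [ffun l => bvec j (t l)])%:R.
Proof.
rewrite mxE summxE; congr (_ * _); apply: eq_bigr => t _; by rewrite !mxE.
Qed.

Lemma noninj_sum (f f' : tens d n) : ~~ injectiveb f ->
  \sum_(t : 'S_n) sgnC t * (f == [ffun l => f' (t l)])%:R = 0.
Proof.
move=> Hni.
case: (pickP (fun p : 'I_n * 'I_n => (f p.1 == f p.2) && (p.1 != p.2)))
  => [[a b] /andP [/eqP Hab Hne] | H]; last first.
  case/negP: Hni; apply/injectiveP => a b Hab; apply/eqP.
  by have := H (a, b); rewrite /= Hab eqxx /= => /negbFE.
have fK l : f (tperm a b l) = f l.
  by case: tpermP => // ->; rewrite Hab.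
set S := (X in X = 0).
have HS : S = - S.
  rewrite {1}/S (reindex_inj (mulgI (tperm a b))) /S -sumrN; apply: eq_bigr => t _.
  rewrite sgnCM /sgnC odd_tperm Hne /= expr1 mulN1r -mulNr.
  have -> : (f == [ffun l => f' ((tperm a b * t)%g l)]) = (f == [ffun l => f' (t l)]);
    last by [].
  apply/idP/idP => /eqP Hf; apply/eqP; apply/ffunP => l.
    by rewrite -fK; move/ffunP: Hf => /(_ (tperm a b l)); rewrite !ffunE permM tpermK.
  by rewrite -fK ffunE permM; move/ffunP: Hf => /(_ (tperm a b l)); rewrite ffunE.
have H2 : S *+ 2 = 0 by rewrite mulr2n {1}HS addNr.
by move/eqP: H2; rewrite mulrn_eq0 /= => /eqP.
Qed.

Lemma AdA : mxadj A *m A = Pm.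
Proof.
apply/matrixP => i j; rewrite Pm_entry mxE.
under eq_bigr do rewrite mxadjE !AE conjCM cA_conj eps2_conj mulrACA.
rewrite -mulr_sumr cA_sq.
rewrite (sum_tens (fun g => eps2 hnd (bvec i) g * eps2 hnd (bvec j) g)).
rewrite eps2_gram.
case: (boolP (injectiveb (bvec i))) => [/injectiveP Hi|Hni]; last first.
  rewrite [X in _ = _ * X]noninj_sum // mulr0 big1 ?mul0r ?mulr0 // => s _.
  case: eqP => // Hf; case/negP: Hni; apply/injectiveP => a b.
  by rewrite Hf !ffunE => /perm_inj /castL_inj.
rewrite (count_ext (@castL_inj _ _ hnd) (@castR_inj _ _ hnd) (@castLR_neq _ _ hnd)
                   (@cast_cover _ _ hnd) (@hd _ _ hnd) Hi).
set Y := (X in _ = _ * X).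
have -> : \sum_(t : 'S_n) sgnC t * (bvec j == [ffun l => bvec i (t l)])%:R = Y.
  rewrite /Y (reindex_inj invg_inj) /=; apply: eq_bigr => t _.
  rewrite /sgnC odd_permV.
  have -> : (bvec j == [ffun l => bvec i ((t^-1)%g l)]) = (bvec i == [ffun l => bvec j (t l)]);
    last by [].
  apply/idP/idP => /eqP H; apply/eqP; apply/ffunP => l.
    by move/ffunP: H => /(_ (t l)); rewrite !ffunE permK => ->.
  by move/ffunP: H => /(_ (t^-1 l)%g); rewrite !ffunE permKV => ->.
have H1 : (m`!)%:R != 0 :> algC by rewrite pnatr_eq0 -lt0n fact_gt0.
have H2 : (n`!)%:R != 0 :> algC by rewrite pnatr_eq0 -lt0n fact_gt0.
by field; rewrite H1 H2.
Qed.

Lemma sum_collapseR (T : finType) (x : T) (F : T -> algC) :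
  \sum_(y : T) F y * (y == x)%:R = F x.
Proof. rewrite -[RHS](sum_collapse x); apply: eq_bigr => y _; exact: mulrC. Qed.

Lemma Aperm t : A *m permT d t = sgnC t *: A.
Proof.
apply/matrixP => k j; rewrite mulmxE' scalemxE'.
under eq_bigr do rewrite AE mxE.
rewrite (sum_tens (fun f => cA * eps2 hnd f (bvec k) * (f == [ffun l => bvec j (t l)])%:R)).
by rewrite sum_collapseR eps2_permL AE; ring.
Qed.

Lemma A_Pm : A *m Pm = A.
Proof.
rewrite /Pm -scalemxAr mulmx_sumr.
under eq_bigr do rewrite -scalemxAr Aperm scalerA sgnC_sq scale1r.
rewrite sumr_const card_Sn -scaler_nat scalerA mulVf ?scale1r //.
by rewrite pnatr_eq0 -lt0n fact_gt0.
Qed.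

Lemma Pm_antisym (X : 'M[algC]_(dimT d n)) :
  antisym_supported X -> Pm *m X = X.
Proof.
move=> HX; rewrite /Pm -scalemxAl mulmx_suml.
under eq_bigr do rewrite -scalemxAl HX scalerA sgnC_sq scale1r.
rewrite sumr_const card_Sn -scaler_nat scalerA mulVf ?scale1r //.
by rewrite pnatr_eq0 -lt0n fact_gt0.
Qed.

Lemma AAdA : A *m mxadj A *m A = A.
Proof. by rewrite -mulmxA AdA A_Pm. Qed.

Lemma AdAAd : mxadj A *m A *m mxadj A = mxadj A.
Proof.
have := congr1 (@mxadj _ _) AAdA.
by rewrite !mxadjM mxadjK mulmxA.
Qed.

Lemma sum_collapse2 (T1 T2 : finType) (x1 : T1) (x2 : T2) (F : T1 -> T2 -> algC) :
  \sum_(a : T1) \sum_(b : T2) ((b == x2) && (a == x1))%:R * F a b = F x1 x2.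
Proof.
rewrite -(sum_collapse x1 (fun a => F a x2)); apply: eq_bigr => a _.
rewrite -(sum_collapse x2 (fun b => (a == x1)%:R * F a b)); apply: eq_bigr => b _.
by rewrite -mulnb natrM mulrA.
Qed.

Lemma tensU_A (U : 'M[algC]_d) :
  tensU m U *m A *m tensU n U^T = \det U *: A.
Proof.
apply/matrixP => i j; rewrite mulmxE' scalemxE'.
under eq_bigr do rewrite mulmxE'.
rewrite (sum_rank (T := tens d n)).
transitivity (\sum_(f' : tens d n) \sum_(g' : tens d m)
    (\prod_(r < m) U (bvec i r) (g' r)) * (cA * eps2 hnd f' g') *
    (\prod_(l < n) U (bvec j l) (f' l))).
  apply: eq_bigr => f' _; rewrite mulr_suml.
  rewrite (sum_rank (T := tens d m)).
  apply: eq_bigr => g' _; rewrite AE /tensU !mxE /bvec !enum_rankK.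
  congr (_ * _ * _); apply: eq_bigr => l _; by rewrite mxE.
rewrite (AE i j) (mulrCA (\det U)) (mulrC (\det U)) eps2_det mulr_sumr.
under eq_bigr do (under eq_bigr do rewrite /eps2 !mulr_sumr mulr_suml; rewrite exchange_big /=).
rewrite exchange_big /=; apply: eq_bigr => s _.
transitivity (\sum_(f' : tens d n) \sum_(g' : tens d m)
  ((g' == [ffun r => s (castR hnd r)]) && (f' == [ffun l => s (castL hnd l)]))%:R *
  (cA * sgnC s * ((\prod_(l < n) U (bvec j l) (f' l)) *
     (\prod_(r < m) U (bvec i r) (g' r))))).
  apply: eq_bigr => f' _; apply: eq_bigr => g' _; ring.
rewrite (sum_collapse2 _ _ (fun (f' : tens d n) (g' : tens d m) => cA * sgnC s * ((\prod_(l < n) U (bvec j l) (f' l)) *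
     (\prod_(r < m) U (bvec i r) (g' r))))).
rewrite [RHS]mulrA; congr (_ * (_ * _)); apply: eq_bigr => l _; by rewrite ffunE.
Qed.

End Mat.

Section Tens.
Variables (d k : nat).

Lemma bvec_eq (i j : 'I_(dimT d k)) : (bvec i == bvec j) = (i == j).
Proof. by rewrite /bvec (inj_eq enum_val_inj). Qed.

Lemma tensU_mul (U W : 'M[algC]_d) :
  tensU k U *m tensU k W = tensU k (U *m W).
Proof.
apply/matrixP => i j; rewrite !mxE (sum_rank (T := tens d k)).
under eq_bigr do rewrite !mxE /bvec !enum_rankK.
under [RHS]eq_bigr do rewrite mxE.
rewrite bigA_distr_bigA /=; apply: eq_bigr => f _.
by rewrite -big_split.
Qed.

Lemma tensU1 : tensU k (1%:M : 'M[algC]_d) = 1%:M.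
Proof.
apply/matrixP => i j; rewrite !mxE.
under eq_bigr do rewrite mxE.
rewrite prod_indic -bvec_eq.
have -> : [forall l, bvec i l == bvec j l] = (bvec i == bvec j); last by [].
by apply/forallP/eqP => [H|-> l //]; apply/ffunP => l; apply/eqP.
Qed.

Lemma tensU_perm (V : 'M[algC]_d) (t : 'S_k) :
  permT d t *m tensU k V = tensU k V *m permT d t.
Proof.
apply/matrixP => i j; rewrite !mxE !(sum_rank (T := tens d k)).
under eq_bigr do rewrite !mxE /bvec !enum_rankK.
under [RHS]eq_bigr do rewrite !mxE /bvec !enum_rankK.
rewrite sum_collapseR.
transitivity (\sum_(f : tens d k) (f == [ffun l => enum_val i ((t^-1)%g l)])%:R *
   \prod_(l < k) V (f l) (enum_val j l)).
  apply: eq_bigr => f _.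
  have -> : (enum_val i == [ffun l => f (t l)]) = (f == [ffun l => enum_val i ((t^-1)%g l)]);
    last by [].
  apply/idP/idP => /eqP H; apply/eqP; apply/ffunP => l.
    by rewrite H !ffunE permKV.
  by rewrite H !ffunE permK.
rewrite sum_collapse.
rewrite (reindex_inj (@perm_inj _ t)) /=; apply: eq_bigr => l _.
by rewrite !ffunE permK.
Qed.

End Tens.
Lemma adj_sum_zero (I : finType) q p (P : pred I) (X : I -> 'M[algC]_(q, p)) :
  \sum_(k | P k) mxadj (X k) *m X k = 0 -> forall k, P k -> X k = 0.
Proof.
move=> H.
have Htr k : \tr (mxadj (X k) *m X k) = \sum_i \sum_j (X k j i)^* * X k j i.
  by apply: eq_bigr => i _; rewrite mulmxE'; apply: eq_bigr => j _; rewrite mxadjE.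
have ge k : 0 <= \tr (mxadj (X k) *m X k).
  rewrite Htr; apply: sumr_ge0 => i _; apply: sumr_ge0 => j _.
  by rewrite mulrC mul_conjC_ge0.
have sum0 : \sum_(k | P k) \tr (mxadj (X k) *m X k) = 0.
  have := congr1 (@mxtrace _ _) H; rewrite /mxtrace.
  under eq_bigr do rewrite summxE.
  rewrite exchange_big /= => ->; apply: big1 => i _; by rewrite mxE.
move=> k Pk.
have Hk := psumr_eq0P (fun k _ => ge k) sum0 Pk; rewrite Htr in Hk.
have gej i j : 0 <= (X k j i)^* * X k j i by rewrite mulrC mul_conjC_ge0.
have Hi i : \sum_j (X k j i)^* * X k j i = 0.
  apply: (psumr_eq0P (P := predT) _ Hk) => // i' _; apply: sumr_ge0 => j _; exact: gej.
apply/matrixP => j i; rewrite mxE.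
have := psumr_eq0P (P := predT) (fun j _ => gej i j) (Hi i) (isT : predT j).
by move=> /eqP; rewrite mulrC mul_conjC_eq0 => /eqP.
Qed.

Lemma kraus_apply p q (F : 'M[algC]_p -> 'M[algC]_q) (B : 'M[algC]_(q, p)) :
  cptp_with_kraus F B -> B *m mxadj B *m B = B ->
  forall Z, F (mxadj B *m Z *m B) = B *m (mxadj B *m Z *m B) *m mxadj B.
Proof.
move=> [mm [K [[H1 H2] [k0 Hk0]]]] HB Z.
have Hz : forall k, k != k0 -> K k *m mxadj B = 0.
  apply: (adj_sum_zero (P := fun k => k != k0) (X := fun k => K k *m mxadj B)).
  have := congr1 (fun M => B *m M *m mxadj B) H1; rewrite /= mulmx1.
  rewrite mulmx_sumr mulmx_suml (bigD1 k0) //= Hk0.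
  rewrite !mulmxA HB.
  move/(congr1 (fun M => M - B *m mxadj B)); rewrite /= addrAC subrr add0r => HS.
  apply: (etrans _ HS).
  apply: eq_bigr => k _; by rewrite mxadjM mxadjK !mulmxA.
rewrite H2 (bigD1 k0) //= Hk0 big1 ?addr0 // => k Hk.
by rewrite !mulmxA (Hz k Hk) !mul0mx.
Qed.

Unset Implicit Arguments.
Theorem theorem1 (d n : nat) (hnd : (n <= d)%N)
  (E : 'M[algC]_(dimT d n) -> 'M[algC]_(dimT d (d - n)))
  (D : 'M[algC]_(dimT d (d - n)) -> 'M[algC]_(dimT d n)) :
  cptp_with_kraus E (Aop hnd) ->
  cptp_with_kraus D (mxadj (Aop hnd)) ->
  forall (U : 'M[algC]_d), unitary U ->
  forall rho : 'M[algC]_(dimT d n), density rho -> antisym_supported rho ->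
  D (tensU (d - n) U *m E rho *m mxadj (tensU (d - n) U)) =
  tensU n (map_mx Num.conj U) *m rho *m mxadj (tensU n (map_mx Num.conj U)).
Proof.
move=> HE HD U HU rho [Hh _] Has.
set A := Aop hnd.
have AdAX X : antisym_supported X -> mxadj A *m A *m X = X.
  by move=> HX; rewrite AdA Pm_antisym.
have XAdA X : mxadj X = X -> antisym_supported X -> X *m (mxadj A *m A) = X.
  move=> HXh HX; have := congr1 (@mxadj _ _) (AdAX X HX).
  by rewrite !mxadjM mxadjK HXh mulmxA.
have Erho : E rho = A *m rho *m mxadj A.
  have rho_eq : rho = mxadj A *m (A *m rho *m mxadj A) *m A.
    by rewrite !mulmxA AdAX // -mulmxA XAdA.
  by rewrite {1}rho_eq (kraus_apply HE (AAdA hnd)) -rho_eq.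
set T := tensU (d - n) U.
set V := tensU n (map_mx Num.conj U).
have H1 : mxadj U *m U = 1%:M by apply: mulmx1C.
have H2 : U^T *m map_mx Num.conj U = 1%:M.
  by rewrite -[1%:M]trmx1 -H1 trmx_mul /mxadj trmxK.
have TA : T *m A = \det U *: (A *m V).
  rewrite -[T *m A]mulmx1 -(tensU1 d n) -H2 -tensU_mul mulmxA tensU_A.
  by rewrite -scalemxAl.
have Hdet : \det U * (\det U)^* = 1.
  have Hd : \det (mxadj U) = (\det U)^* by rewrite /mxadj det_tr det_map_mx.
  by rewrite -Hd -det_mulmx HU det1.
set Y := V *m rho *m mxadj V.
have sig : T *m E rho *m mxadj T = A *m Y *m mxadj A.
  rewrite Erho.
  have -> : T *m (A *m rho *m mxadj A) *m mxadj T = (T *m A) *m rho *m mxadj (T *m A).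
    by rewrite mxadjM !mulmxA.
  rewrite TA mxadjZ mxadjM -scalemxAl -scalemxAl -scalemxAr scalerA Hdet scale1r.
  by rewrite /Y !mulmxA.
have YA : antisym_supported Y.
  move=> t; rewrite /Y !mulmxA tensU_perm -(mulmxA V (permT d t) rho) Has.
  by rewrite -scalemxAr -scalemxAl.
have Yh : mxadj Y = Y by rewrite /Y !mxadjM mxadjK Hh mulmxA.
rewrite sig; clearbody Y.
have -> : A *m Y *m mxadj A = mxadj (mxadj A) *m Y *m mxadj A by rewrite mxadjK.
rewrite (kraus_apply HD); last by rewrite mxadjK AdAAd.
rewrite mxadjK !mulmxA AdAX // -mulmxA XAdA //.
Qed.
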